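(* Let $C_0,C_1,C_2,\dots$ be the successive configurations of the weakly universal Turing machine WUTM(2,4) (defined in the context) started from a configuration $C_0$ whose tape is a weak tape $\dots w_lw_l\,\alpha_0\,x_0\,\beta_0\,w_rw_r\dots$. Let $M_0$ be a marking of UPN(14,29) that represents $C_0$. Then the run of UPN(14,29) from $M_0$ never halts, and there are indices $0=n_0<n_1<n_2<\cdots$ such that for every $k\ge 0$ the marking reached after $n_k$ firings represents $C_k$ (possibly after the insertion transitions $t_1$ or $t_2$ have fired). Moreover, for fixed $M_0$, $n_k=O(k\cdot 5^{k})$, and every place's marking during the first $n_k$ firings has $O(k)$ base-5 digits (space $O(k)$).
   Context: A deterministic inhibitor Petri net (DIPN) has places $p_1,\dots,p_m$ holding nonnegative integer numbers of tokens (the marking) and transitions $t_1,\dots,t_n$. Each pair (place $p$, transition $t$) carries an input value $w^-\in\{0,1,2,\dots\}\cup\{-1\}$ and an output value $w^+\ge 0$. Transition $t$ is firable iff every place with input value $w^->0$ holds at least $w^-$ tokens and every place with input value $-1$ (inhibitor arc) holds $0$ tokens. At each step the firable transition with the smallest index fires: it removes $w^-$ tokens from each place with $w^->0$ and adds $w^+$ tokens to each place (inhibitor arcs remove nothing). The net halts when no transition is firable. UPN(14,29) has places $p_1=X$, $p_2=U$, $p_3=L$, $p_4=R$, $p_5=\mathit{STEP}$, $p_6=\mathit{MOVE}$, $p_7=\mathit{RIGHT}$, $p_8=\mathit{MOVE1}$, $p_9,\dots,p_{14}$, and 29 transitions. Below, ''$P\,a,b$'' means input value $a$ and output value $b$ for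 place $P$; unlisted places have $0,0$. $t_1$: $L\,{-1},167$; $\mathit{STEP}\,1,1$. $t_2$: $R\,{-1},13596$; $\mathit{STEP}\,1,1$. $t_3$: $X\,4,2$; $U\,1,1$; $\mathit{STEP}\,1,0$; $\mathit{MOVE}\,0,1$; $\mathit{RIGHT}\,0,1$. $t_4$: $X\,4,4$; $\mathit{STEP}\,1,0$; $\mathit{MOVE}\,0,1$. $t_5$: $X\,3,1$; $U\,1,1$; $\mathit{STEP}\,1,0$; $\mathit{MOVE}\,0,1$; $\mathit{RIGHT}\,0,1$. $t_6$: $X\,3,4$; $\mathit{STEP}\,1,0$; $\mathit{MOVE}\,0,1$. $t_7$: $X\,2,3$; $U\,1,1$; $\mathit{STEP}\,1,0$; $\mathit{MOVE}\,0,1$. $t_8$: $X\,2,4$; $U\,0,1$; $\mathit{STEP}\,1,0$; $\mathit{MOVE}\,0,1$. $t_9$: $X\,1,4$; $U\,1,0$; $\mathit{STEP}\,1,0$; $\mathit{MOVE}\,0,1$; $\mathit{RIGHT}\,0,1$. $t_{10}$: $X\,1,3$; $\mathit{STEP}\,1,0$; $\mathit{MOVE}\,0,1$. $t_{11}$: $R\,1,0$; $\mathit{MOVE}\,1,1$; $\mathit{RIGHT}\,{-1},0$; $p_9\,0,5$. $t_{12}$: $L\,1,0$; $\mathit{MOVE}\,1,1$; $\mathit{RIGHT}\,1,1$; $p_9\,0,5$. $t_{13}$: $\mathit{MOVE}\,1,0$; $p_{10}\,0,1$. $t_{14}$: $R\,0,1$; $\mathit{RIGHT}\,{-1},0$;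 $p_9\,1,0$; $p_{10}\,1,1$. $t_{15}$: $L\,0,1$; $\mathit{RIGHT}\,1,1$; $p_9\,1,0$; $p_{10}\,1,1$. $t_{16}$: $p_{10}\,1,0$; $p_{11}\,0,1$. $t_{17}$: $X\,1,0$; $R\,0,1$; $\mathit{RIGHT}\,{-1},0$; $p_{11}\,1,1$. $t_{18}$: $X\,1,0$; $L\,0,1$; $\mathit{RIGHT}\,1,1$; $p_{11}\,1,1$. $t_{19}$: $\mathit{MOVE1}\,0,1$; $p_{11}\,1,0$. $t_{20}$: $R\,5,0$; $\mathit{RIGHT}\,1,1$; $\mathit{MOVE1}\,1,1$; $p_{14}\,0,1$. $t_{21}$: $L\,5,0$; $\mathit{RIGHT}\,{-1},0$; $\mathit{MOVE1}\,1,1$; $p_{14}\,0,1$. $t_{22}$: $\mathit{MOVE1}\,1,0$; $p_{12}\,0,1$. $t_{23}$: $X\,0,1$; $R\,1,0$; $\mathit{RIGHT}\,1,1$; $p_{12}\,1,1$. $t_{24}$: $X\,0,1$; $L\,1,0$; $\mathit{RIGHT}\,{-1},0$; $p_{12}\,1,1$. $t_{25}$: $p_{12}\,1,0$; $p_{13}\,0,1$. $t_{26}$: $R\,0,1$; $\mathit{RIGHT}\,1,1$; $p_{13}\,1,1$; $p_{14}\,1,0$. $t_{27}$: $L\,0,1$; $\mathit{RIGHT}\,{-1},0$; $p_{13}\,1,1$; $p_{14}\,1,0$. $t_{28}$: $\mathit{STEP}\,0,1$; $\mathit{RIGHT}\,1,0$; $p_{13}\,1,0$. $t_{29}$: $\mathit{STEP}\,0,1$;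 $p_{13}\,1,0$. WUTM(2,4) (Neary–Woods) has states $u_1,u_2$ with codes $s(u_1)=0$, $s(u_2)=1$, start state $u_1$, and tape alphabet $\Sigma=\{0,1,\bar 0,\bar 1\}$ with codes $s(0)=1$, $s(1)=2$, $s(\bar0)=3$, $s(\bar1)=4$. Its instructions (scanned symbol, state) $\mapsto$ (written symbol, move, new state) are: $(0,u_1)\mapsto(\bar0,\text{left},u_1)$; $(0,u_2)\mapsto(\bar1,\text{right},u_1)$; $(1,u_1)\mapsto(\bar1,\text{left},u_2)$; $(1,u_2)\mapsto(\bar0,\text{left},u_2)$; $(\bar0,u_1)\mapsto(\bar1,\text{left},u_1)$; $(\bar0,u_2)\mapsto(0,\text{right},u_2)$; $(\bar1,u_1)\mapsto(\bar1,\text{left},u_1)$; $(\bar1,u_2)\mapsto(1,\text{right},u_2)$. It has no halting state (every pair is defined). For a finite word $\alpha=y_1\cdots y_m$ (leftmost $y_1$) set $\lambda(\alpha)=\sum_{i=1}^m s(y_i)5^{m-i}$ and for $\beta=z_1\cdots z_n$ set $\rho(\beta)=\sum_{i=1}^n s(z_i)5^{i-1}$; empty words have code $0$. The blank words are $w_l=0\,0\,\bar0\,1$ (repeated infinitely to the left; $\lambda(w_l)=167$) and $w_r=0\,\bar1\,\bar0\,\bar0\,0\,\bar1$ (repeated infinitely to the right; $\rho(w_r)=13596$). A weak tape is a bi-infinite tape $\dots w_lw_l\,\alpha\,x\,\beta\,w_rw_r\dots$ with $\alpha,\beta$ finite and $x$ the scanned cell. A marking represents the configuration (state $u$, such a tape)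 if, for some such decomposition, $U=s(u)$, $X=s(x)$, $L=\lambda(\alpha)$, $R=\rho(\beta)$, $\mathit{STEP}=1$, and $\mathit{MOVE}=\mathit{RIGHT}=\mathit{MOVE1}=p_9=\dots=p_{14}=0$. *)

(* Defs.v *)
From Stdlib Require Import ZArith List Arith Lia Bool.
Import ListNotations.
Open Scope Z_scope.

(* Places are numbered by nat (UPN(14,29) uses places 1..14).
   A marking assigns a number of tokens to each place. *)
Definition marking := nat -> nat.

(* An arc entry (p, w_in, w_out): place p has input value w_in
   (w_in = -1 means inhibitor arc) and output value w_out.
   Places not listed in a transition have input/output value 0,0. *)
Definition arc := (nat * Z * nat)%type.
Definition transition := list arc.

Definition in_val (t : transition) (p : nat) : Z :=
  fold_right (fun (a : arc) acc => let '(q, wi, _) := a in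
                if Nat.eqb p q then wi else acc) 0 t.

Definition out_val (t : transition) (p : nat) : nat :=
  fold_right (fun (a : arc) acc => let '(q, _, wo) := a in
                if Nat.eqb p q then wo else acc) 0%nat t.

Definition firable (M : marking) (t : transition) : bool :=
  forallb (fun (a : arc) => let '(p, wi, _) := a in
     (if 0 <? wi then wi <=? Z.of_nat (M p) else true) &&
     (if wi =? -1 then Nat.eqb (M p) 0 else true)) t.

Definition fire (M : marking) (t : transition) : marking :=
  fun p => (M p - Z.to_nat (Z.max 0 (in_val t p)) + out_val t p)%nat.

(* One step: the firable transition with the smallest index fires;
   None means the net halts (no transition firable). *)
Fixpoint dipn_step (N : list transition) (M : marking) : option marking :=
  match N with
  | [] => None
  | t :: N' => if firable M t then Some (fire M t) else dipn_step N' M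
  end.

Fixpoint dipn_run (N : list transition) (M : marking) (n : nat) : option marking :=
  match n with
  | O => Some M
  | S n' => match dipn_run N M n' with
            | Some M' => dipn_step N M'
            | None => None
            end
  end.

Definition pX := 1%nat.  Definition pU := 2%nat.  Definition pL := 3%nat.
Definition pR := 4%nat.  Definition pSTEP := 5%nat. Definition pMOVE := 6%nat.
Definition pRIGHT := 7%nat. Definition pMOVE1 := 8%nat.
Definition p9 := 9%nat. Definition p10 := 10%nat. Definition p11 := 11%nat.
Definition p12 := 12%nat. Definition p13 := 13%nat. Definition p14 := 14%nat.

Definition UPN : list transition := [
 [(pL, -1, 167%nat); (pSTEP, 1, 1%nat)];
 [(pR, -1, 13596%nat); (pSTEP, 1, 1%nat)];
 [(pX, 4, 2%nat); (pU, 1, 1%nat); (pSTEP, 1, 0%nat); (pMOVE, 0, 1%nat); (pRIGHT, 0, 1%nat)];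
 [(pX, 4, 4%nat); (pSTEP, 1, 0%nat); (pMOVE, 0, 1%nat)];
 [(pX, 3, 1%nat); (pU, 1, 1%nat); (pSTEP, 1, 0%nat); (pMOVE, 0, 1%nat); (pRIGHT, 0, 1%nat)];
 [(pX, 3, 4%nat); (pSTEP, 1, 0%nat); (pMOVE, 0, 1%nat)];
 [(pX, 2, 3%nat); (pU, 1, 1%nat); (pSTEP, 1, 0%nat); (pMOVE, 0, 1%nat)];
 [(pX, 2, 4%nat); (pU, 0, 1%nat); (pSTEP, 1, 0%nat); (pMOVE, 0, 1%nat)];
 [(pX, 1, 4%nat); (pU, 1, 0%nat); (pSTEP, 1, 0%nat); (pMOVE, 0, 1%nat); (pRIGHT, 0, 1%nat)];
 [(pX, 1, 3%nat); (pSTEP, 1, 0%nat); (pMOVE, 0, 1%nat)];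
 [(pR, 1, 0%nat); (pMOVE, 1, 1%nat); (pRIGHT, -1, 0%nat); (p9, 0, 5%nat)];
 [(pL, 1, 0%nat); (pMOVE, 1, 1%nat); (pRIGHT, 1, 1%nat); (p9, 0, 5%nat)];
 [(pMOVE, 1, 0%nat); (p10, 0, 1%nat)];
 [(pR, 0, 1%nat); (pRIGHT, -1, 0%nat); (p9, 1, 0%nat); (p10, 1, 1%nat)];
 [(pL, 0, 1%nat); (pRIGHT, 1, 1%nat); (p9, 1, 0%nat); (p10, 1, 1%nat)];
 [(p10, 1, 0%nat); (p11, 0, 1%nat)];
 [(pX, 1, 0%nat); (pR, 0, 1%nat); (pRIGHT, -1, 0%nat); (p11, 1, 1%nat)];
 [(pX, 1, 0%nat); (pL, 0, 1%nat); (pRIGHT, 1, 1%nat); (p11, 1, 1%nat)];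
 [(pMOVE1, 0, 1%nat); (p11, 1, 0%nat)];
 [(pR, 5, 0%nat); (pRIGHT, 1, 1%nat); (pMOVE1, 1, 1%nat); (p14, 0, 1%nat)];
 [(pL, 5, 0%nat); (pRIGHT, -1, 0%nat); (pMOVE1, 1, 1%nat); (p14, 0, 1%nat)];
 [(pMOVE1, 1, 0%nat); (p12, 0, 1%nat)];
 [(pX, 0, 1%nat); (pR, 1, 0%nat); (pRIGHT, 1, 1%nat); (p12, 1, 1%nat)];
 [(pX, 0, 1%nat); (pL, 1, 0%nat); (pRIGHT, -1, 0%nat); (p12, 1, 1%nat)];
 [(p12, 1, 0%nat); (p13, 0, 1%nat)];
 [(pR, 0, 1%nat); (pRIGHT, 1, 1%nat); (p13, 1, 1%nat); (p14, 1, 0%nat)];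
 [(pL, 0, 1%nat); (pRIGHT, -1, 0%nat); (p13, 1, 1%nat); (p14, 1, 0%nat)];
 [(pSTEP, 0, 1%nat); (pRIGHT, 1, 0%nat); (p13, 1, 0%nat)];
 [(pSTEP, 0, 1%nat); (p13, 1, 0%nat)]
].

Inductive sym := S0 | S1 | S0b | S1b.
Inductive state := u1 | u2.
Inductive dir := Left | Right.

Definition sym_code (a : sym) : nat :=
  match a with S0 => 1 | S1 => 2 | S0b => 3 | S1b => 4 end.
Definition state_code (u : state) : nat :=
  match u with u1 => 0 | u2 => 1 end.

Definition delta (a : sym) (u : state) : sym * dir * state :=
  match a, u with
  | S0, u1 => (S0b, Left, u1)
  | S0, u2 => (S1b, Right, u1)
  | S1, u1 => (S1b, Left, u2)
  | S1, u2 => (S0b, Left, u2)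
  | S0b, u1 => (S1b, Left, u1)
  | S0b, u2 => (S0, Right, u2)
  | S1b, u1 => (S1b, Left, u1)
  | S1b, u2 => (S1, Right, u2)
  end.

Record config := mkConfig { cstate : state; ctape : Z -> sym; chead : Z }.

Definition tm_step (c : config) : config :=
  let '(w, d, u') := delta (ctape c (chead c)) (cstate c) in
  let T' := fun z => if Z.eqb z (chead c) then w else ctape c z in
  let h' := match d with Left => chead c - 1 | Right => chead c + 1 end in
  mkConfig u' T' h'.

Definition tm_iter (k : nat) (c : config) : config := Nat.iter k tm_step c.

Definition wl : list sym := [S0; S0; S0b; S1].
Definition wr : list sym := [S0; S1b; S0b; S0b; S0; S1b].

(* lambda(y_1..y_m) = sum s(y_i) 5^(m-i);  rho(z_1..z_n) = sum s(z_i) 5^(i-1). *)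
Definition lam (al : list sym) : nat :=
  fold_left (fun acc y => 5 * acc + sym_code y)%nat al 0%nat.
Definition rho (be : list sym) : nat :=
  fold_right (fun z acc => sym_code z + 5 * acc)%nat 0%nat be.

(* The tape T with head at h is ... w_l w_l alpha x beta w_r w_r ... *)
Definition weak_decomp (T : Z -> sym) (h : Z) (al : list sym) (x : sym)
    (be : list sym) : Prop :=
  T h = x /\
  (forall i : nat, (i < length al)%nat ->
       T (h - Z.of_nat (S i)) = nth (length al - 1 - i) al S0) /\
  (forall j : nat,
       T (h - Z.of_nat (length al) - Z.of_nat (S j)) = nth (3 - j mod 4) wl S0) /\
  (forall i : nat, (i < length be)%nat ->
       T (h + Z.of_nat (S i)) = nth i be S0) /\
  (forall j : nat,
       T (h + Z.of_nat (length be) + Z.of_nat (S j)) = nth (j mod 6) wr S0).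

Definition represents (M : marking) (c : config) : Prop :=
  exists (al be : list sym),
    weak_decomp (ctape c) (chead c) al (ctape c (chead c)) be /\
    M pU = state_code (cstate c) /\
    M pX = sym_code (ctape c (chead c)) /\
    M pL = lam al /\
    M pR = rho be /\
    M pSTEP = 1%nat /\
    (forall p : nat, (6 <= p <= 14)%nat -> M p = 0%nat).

(* Main.v *)
Require Import Defs.
From Stdlib Require Import ZArith List Arith Lia Bool FunctionalExtensionality.
Import ListNotations.
Local Open Scope nat_scope.

Definition mk (x u l r st mv rt m1 a9 a10 a11 a12 a13 a14 : nat) (rest : marking) : marking :=
 fun p => match p with 1 => x | 2 => u | 3 => l | 4 => r | 5 => st | 6 => mv | 7 => rt
   | 8 => m1 | 9 => a9 | 10 => a10 | 11 => a11 | 12 => a12 | 13 => a13 | 14 => a14 | _ => rest p end.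

Definition firable_n (M : marking) (t : transition) : bool :=
  forallb (fun (a : arc) => let '(p, wi, _) := a in
     (if (0 <? wi)%Z then Nat.leb (Z.to_nat wi) (M p) else true) &&
     (if (wi =? -1)%Z then Nat.eqb (M p) 0 else true)) t.

Lemma firable_eq M t : firable M t = firable_n M t.
Proof.
  unfold firable, firable_n. induction t as [|[[p wi] wo] t IH]; simpl; auto.
  rewrite IH. f_equal. f_equal.
  destruct (0 <? wi)%Z eqn:E; auto.
  apply Z.ltb_lt in E.
  destruct (wi <=? Z.of_nat (M p))%Z eqn:E1; destruct (Nat.leb (Z.to_nat wi) (M p)) eqn:E2; auto.
  - apply Z.leb_le in E1; apply Nat.leb_gt in E2; lia.
  - apply Z.leb_gt in E1; apply Nat.leb_le in E2; lia.
Qed.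

Fixpoint step_n (N : list transition) (M : marking) : option marking :=
  match N with
  | [] => None
  | t :: N' => if firable_n M t then Some (fire M t) else step_n N' M
  end.

Lemma step_eq N M : dipn_step N M = step_n N M.
Proof. induction N; simpl; auto. rewrite firable_eq, IHN. auto. Qed.

Arguments fire : simpl never.
Ltac step_tac :=
  rewrite step_eq; unfold UPN;
  repeat (progress (simpl; rewrite ?andb_false_r));
  apply (f_equal Some); unfold fire; apply functional_extensionality; intros p;
  do 15 (destruct p as [|p]; [simpl; lia|]); simpl; lia.


Lemma run_S N M n : dipn_run N M (S n) =
  match dipn_run N M n with Some M' => dipn_step N M' | None => None end.
Proof. reflexivity. Qed.

Lemma run_add N M a b : dipn_run N M (a + b) =
  match dipn_run N M a with Some M' => dipn_run N M' b | None => None end.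
Proof.
  induction b.
  - rewrite Nat.add_0_r. destruct (dipn_run N M a); auto.
  - rewrite Nat.add_succ_r, run_S, IHb. destruct (dipn_run N M a); auto.
Qed.

Lemma run_None N M a b : dipn_run N M a = None -> dipn_run N M (a + b) = None.
Proof. intros H. rewrite run_add, H. auto. Qed.

Definition bounded (B : nat) (M : marking) : Prop :=
  forall p, 1 <= p <= 14 -> M p < B.

Definition reach (B : nat) (M : marking) (m : nat) (M' : marking) : Prop :=
  dipn_run UPN M m = Some M' /\
  forall j M'', j <= m -> dipn_run UPN M j = Some M'' -> bounded B M''.

Lemma reach_refl B M : bounded B M -> reach B M 0 M.
Proof.
  intros H. split; auto. intros j M'' Hj Hr. assert (j = 0) by lia. subst.
  simpl in Hr. inversion Hr; subst; auto.
Qed.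

Lemma reach_trans B M m1 M1 m2 M2 :
  reach B M m1 M1 -> reach B M1 m2 M2 -> reach B M (m1 + m2) M2.
Proof.
  intros [H1 B1] [H2 B2]. split.
  - rewrite run_add, H1. auto.
  - intros j M'' Hj Hr. destruct (le_lt_dec j m1).
    + eapply B1; eauto.
    + replace j with (m1 + (j - m1)) in Hr by lia. rewrite run_add, H1 in Hr.
      apply (B2 (j - m1)); [lia | exact Hr].
Qed.

Lemma reach_bnd0 B M m M' : reach B M m M' -> bounded B M.
Proof. intros [_ H]. apply (H 0); auto. lia. Qed.

Lemma reach_cons B M M1 n M2 :
  dipn_step UPN M = Some M1 -> bounded B M -> reach B M1 n M2 -> reach B M (S n) M2.
Proof.
  intros Hs Hb Hr. replace (S n) with (1 + n) by lia. eapply reach_trans; eauto.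
  split. simpl; auto. intros j M'' Hj Hr'. destruct j. simpl in Hr'. inversion Hr'; subst; auto.
  assert (j = 0) by lia; subst. change (dipn_step UPN M = Some M'') in Hr'. rewrite Hs in Hr'. inversion Hr'; subst.
  eapply reach_bnd0; eauto.
Qed.

Lemma bnd_mk B x u l r st mv rt m1 a9 a10 a11 a12 a13 a14 rest :
  x < B -> u < B -> l < B -> r < B -> st < B -> mv < B -> rt < B -> m1 < B ->
  a9 < B -> a10 < B -> a11 < B -> a12 < B -> a13 < B -> a14 < B ->
  bounded B (mk x u l r st mv rt m1 a9 a10 a11 a12 a13 a14 rest).
Proof.
  intros. intros p Hp. do 15 (destruct p as [|p]; [simpl; lia|]). lia.
Qed.

Ltac bnd := apply bnd_mk; lia.

Lemma s_t1 x u r rest : dipn_step UPN (mk x u 0 r 1 0 0 0 0 0 0 0 0 0 rest) =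
  Some (mk x u 167 r 1 0 0 0 0 0 0 0 0 0 rest).
Proof. step_tac. Qed.
Lemma s_t2 x u l rest : dipn_step UPN (mk x u (S l) 0 1 0 0 0 0 0 0 0 0 0 rest) =
  Some (mk x u (S l) 13596 1 0 0 0 0 0 0 0 0 0 rest).
Proof. step_tac. Qed.
Lemma w3 l r rest : dipn_step UPN (mk 4 1 (S l) (S r) 1 0 0 0 0 0 0 0 0 0 rest) = Some (mk 2 1 (S l) (S r) 0 1 1 0 0 0 0 0 0 0 rest).
Proof. step_tac. Qed.

Lemma w4 l r rest : dipn_step UPN (mk 4 0 (S l) (S r) 1 0 0 0 0 0 0 0 0 0 rest) = Some (mk 4 0 (S l) (S r) 0 1 0 0 0 0 0 0 0 0 rest).
Proof. step_tac. Qed.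

Lemma w5 l r rest : dipn_step UPN (mk 3 1 (S l) (S r) 1 0 0 0 0 0 0 0 0 0 rest) = Some (mk 1 1 (S l) (S r) 0 1 1 0 0 0 0 0 0 0 rest).
Proof. step_tac. Qed.

Lemma w6 l r rest : dipn_step UPN (mk 3 0 (S l) (S r) 1 0 0 0 0 0 0 0 0 0 rest) = Some (mk 4 0 (S l) (S r) 0 1 0 0 0 0 0 0 0 0 rest).
Proof. step_tac. Qed.

Lemma w7 l r rest : dipn_step UPN (mk 2 1 (S l) (S r) 1 0 0 0 0 0 0 0 0 0 rest) = Some (mk 3 1 (S l) (S r) 0 1 0 0 0 0 0 0 0 0 rest).
Proof. step_tac. Qed.

Lemma w8 l r rest : dipn_step UPN (mk 2 0 (S l) (S r) 1 0 0 0 0 0 0 0 0 0 rest) = Some (mk 4 1 (S l) (S r) 0 1 0 0 0 0 0 0 0 0 rest).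
Proof. step_tac. Qed.

Lemma w9 l r rest : dipn_step UPN (mk 1 1 (S l) (S r) 1 0 0 0 0 0 0 0 0 0 rest) = Some (mk 4 0 (S l) (S r) 0 1 1 0 0 0 0 0 0 0 rest).
Proof. step_tac. Qed.

Lemma w10 l r rest : dipn_step UPN (mk 1 0 (S l) (S r) 1 0 0 0 0 0 0 0 0 0 rest) = Some (mk 3 0 (S l) (S r) 0 1 0 0 0 0 0 0 0 0 rest).
Proof. step_tac. Qed.

Lemma L11 x u l r a9 rest : dipn_step UPN (mk x u l (S r) 0 1 0 0 a9 0 0 0 0 0 rest) = Some (mk x u l r 0 1 0 0 (5+a9) 0 0 0 0 0 rest).
Proof. step_tac. Qed.

Lemma L13 x u l a9 rest : dipn_step UPN (mk x u l 0 0 1 0 0 a9 0 0 0 0 0 rest) = Some (mk x u l 0 0 0 0 0 a9 1 0 0 0 0 rest).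
Proof. step_tac. Qed.

Lemma L14 x u l r a9 rest : dipn_step UPN (mk x u l r 0 0 0 0 (S a9) 1 0 0 0 0 rest) = Some (mk x u l (S r) 0 0 0 0 a9 1 0 0 0 0 rest).
Proof. step_tac. Qed.

Lemma L16 x u l r rest : dipn_step UPN (mk x u l r 0 0 0 0 0 1 0 0 0 0 rest) = Some (mk x u l r 0 0 0 0 0 0 1 0 0 0 rest).
Proof. step_tac. Qed.

Lemma L17 x u l r rest : dipn_step UPN (mk (S x) u l r 0 0 0 0 0 0 1 0 0 0 rest) = Some (mk x u l (S r) 0 0 0 0 0 0 1 0 0 0 rest).
Proof. step_tac. Qed.

Lemma L19 u l r rest : dipn_step UPN (mk 0 u l r 0 0 0 0 0 0 1 0 0 0 rest) = Some (mk 0 u l r 0 0 0 1 0 0 0 0 0 0 rest).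
Proof. step_tac. Qed.

Lemma L21 u l r a14 rest : dipn_step UPN (mk 0 u (5+l) r 0 0 0 1 0 0 0 0 0 a14 rest) = Some (mk 0 u l r 0 0 0 1 0 0 0 0 0 (S a14) rest).
Proof. step_tac. Qed.

Lemma L22 u s r a14 rest : s < 5 -> dipn_step UPN (mk 0 u s r 0 0 0 1 0 0 0 0 0 a14 rest) = Some (mk 0 u s r 0 0 0 0 0 0 0 1 0 a14 rest).
Proof. intros Hs; destruct s as [|[|[|[|[|s]]]]]; try lia; step_tac. Qed.

Lemma L24 x u l r a14 rest : dipn_step UPN (mk x u (S l) r 0 0 0 0 0 0 0 1 0 a14 rest) = Some (mk (S x) u l r 0 0 0 0 0 0 0 1 0 a14 rest).
Proof. step_tac. Qed.

Lemma L25 x u r a14 rest : dipn_step UPN (mk x u 0 r 0 0 0 0 0 0 0 1 0 a14 rest) = Some (mk x u 0 r 0 0 0 0 0 0 0 0 1 a14 rest).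
Proof. step_tac. Qed.

Lemma L27 x u l r a14 rest : dipn_step UPN (mk x u l r 0 0 0 0 0 0 0 0 1 (S a14) rest) = Some (mk x u (S l) r 0 0 0 0 0 0 0 0 1 a14 rest).
Proof. step_tac. Qed.

Lemma L29 x u l r rest : dipn_step UPN (mk x u l r 0 0 0 0 0 0 0 0 1 0 rest) = Some (mk x u l r 1 0 0 0 0 0 0 0 0 0 rest).
Proof. step_tac. Qed.

Lemma R12 x u l r a9 rest : dipn_step UPN (mk x u (S l) r 0 1 1 0 a9 0 0 0 0 0 rest) = Some (mk x u l r 0 1 1 0 (5+a9) 0 0 0 0 0 rest).
Proof. step_tac. Qed.

Lemma R13 x u r a9 rest : dipn_step UPN (mk x u 0 r 0 1 1 0 a9 0 0 0 0 0 rest) = Some (mk x u 0 r 0 0 1 0 a9 1 0 0 0 0 rest).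
Proof. step_tac. Qed.

Lemma R15 x u l r a9 rest : dipn_step UPN (mk x u l r 0 0 1 0 (S a9) 1 0 0 0 0 rest) = Some (mk x u (S l) r 0 0 1 0 a9 1 0 0 0 0 rest).
Proof. step_tac. Qed.

Lemma R16 x u l r rest : dipn_step UPN (mk x u l r 0 0 1 0 0 1 0 0 0 0 rest) = Some (mk x u l r 0 0 1 0 0 0 1 0 0 0 rest).
Proof. step_tac. Qed.

Lemma R18 x u l r rest : dipn_step UPN (mk (S x) u l r 0 0 1 0 0 0 1 0 0 0 rest) = Some (mk x u (S l) r 0 0 1 0 0 0 1 0 0 0 rest).
Proof. step_tac. Qed.

Lemma R19 u l r rest : dipn_step UPN (mk 0 u l r 0 0 1 0 0 0 1 0 0 0 rest) = Some (mk 0 u l r 0 0 1 1 0 0 0 0 0 0 rest).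
Proof. step_tac. Qed.

Lemma R20 u l r a14 rest : dipn_step UPN (mk 0 u l (5+r) 0 0 1 1 0 0 0 0 0 a14 rest) = Some (mk 0 u l r 0 0 1 1 0 0 0 0 0 (S a14) rest).
Proof. step_tac. Qed.

Lemma R22 u l s a14 rest : s < 5 -> dipn_step UPN (mk 0 u l s 0 0 1 1 0 0 0 0 0 a14 rest) = Some (mk 0 u l s 0 0 1 0 0 0 0 1 0 a14 rest).
Proof. intros Hs; destruct s as [|[|[|[|[|s]]]]]; try lia; step_tac. Qed.

Lemma R23 x u l r a14 rest : dipn_step UPN (mk x u l (S r) 0 0 1 0 0 0 0 1 0 a14 rest) = Some (mk (S x) u l r 0 0 1 0 0 0 0 1 0 a14 rest).
Proof. step_tac. Qed.

Lemma R25 x u l a14 rest : dipn_step UPN (mk x u l 0 0 0 1 0 0 0 0 1 0 a14 rest) = Some (mk x u l 0 0 0 1 0 0 0 0 0 1 a14 rest).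
Proof. step_tac. Qed.

Lemma R26 x u l r a14 rest : dipn_step UPN (mk x u l r 0 0 1 0 0 0 0 0 1 (S a14) rest) = Some (mk x u l (S r) 0 0 1 0 0 0 0 0 1 a14 rest).
Proof. step_tac. Qed.

Lemma R28 x u l r rest : dipn_step UPN (mk x u l r 0 0 1 0 0 0 0 0 1 0 rest) = Some (mk x u l r 1 0 0 0 0 0 0 0 0 0 rest).
Proof. step_tac. Qed.
Lemma LL11 B x u l rest : forall r a9, x + u + l + a9 + 5*r + 1 < B ->
  reach B (mk x u l r 0 1 0 0 a9 0 0 0 0 0 rest) r (mk x u l 0 0 1 0 0 (a9+5*r) 0 0 0 0 0 rest).
Proof.
  induction r; intros a9 Hb.
  - replace (a9 + 5*0) with a9 by lia. apply reach_refl; bnd.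
  - eapply reach_cons; [apply L11 | bnd | ].
    replace (a9 + 5 * S r) with ((5+a9) + 5*r) by lia. apply IHr; lia.
Qed.

Lemma LL14 B x u l rest : forall n r, x + u + l + r + n + 1 < B ->
  reach B (mk x u l r 0 0 0 0 n 1 0 0 0 0 rest) n (mk x u l (r+n) 0 0 0 0 0 1 0 0 0 0 rest).
Proof.
  induction n; intros r Hb.
  - replace (r + 0) with r by lia. apply reach_refl; bnd.
  - eapply reach_cons; [apply L14 | bnd | ].
    replace (r + S n) with (S r + n) by lia. apply IHn; lia.
Qed.

Lemma LL17 B u l rest : forall n r, u + l + r + n + 1 < B ->
  reach B (mk n u l r 0 0 0 0 0 0 1 0 0 0 rest) n (mk 0 u l (r+n) 0 0 0 0 0 0 1 0 0 0 rest).
Proof.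
  induction n; intros r Hb.
  - replace (r + 0) with r by lia. apply reach_refl; bnd.
  - eapply reach_cons; [apply L17 | bnd | ].
    replace (r + S n) with (S r + n) by lia. apply IHn; lia.
Qed.

Lemma LL21 B u l r rest : forall n a14, u + 5*n + l + r + a14 + n + 1 < B ->
  reach B (mk 0 u (5*n+l) r 0 0 0 1 0 0 0 0 0 a14 rest) n (mk 0 u l r 0 0 0 1 0 0 0 0 0 (a14+n) rest).
Proof.
  induction n; intros a14 Hb.
  - replace (a14 + 0) with a14 by lia. apply reach_refl; bnd.
  - replace (5 * S n + l) with (5 + (5*n+l)) by lia.
    eapply reach_cons; [apply L21 | bnd | ].
    replace (a14 + S n) with (S a14 + n) by lia. apply IHn; lia.
Qed.

Lemma LL24 B u r a14 rest : forall n x, x + u + n + r + a14 + 1 < B ->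
  reach B (mk x u n r 0 0 0 0 0 0 0 1 0 a14 rest) n (mk (x+n) u 0 r 0 0 0 0 0 0 0 1 0 a14 rest).
Proof.
  induction n; intros x Hb.
  - replace (x + 0) with x by lia. apply reach_refl; bnd.
  - eapply reach_cons; [apply L24 | bnd | ].
    replace (x + S n) with (S x + n) by lia. apply IHn; lia.
Qed.

Lemma LL27 B x u r rest : forall n l, x + u + l + r + n + 1 < B ->
  reach B (mk x u l r 0 0 0 0 0 0 0 0 1 n rest) n (mk x u (l+n) r 0 0 0 0 0 0 0 0 1 0 rest).
Proof.
  induction n; intros l Hb.
  - replace (l + 0) with l by lia. apply reach_refl; bnd.
  - eapply reach_cons; [apply L27 | bnd | ].
    replace (l + S n) with (S l + n) by lia. apply IHn; lia.
Qed.

Lemma RR12 B x u r rest : forall n a9, x + u + n + r + a9 + 5*n + 1 < B ->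
  reach B (mk x u n r 0 1 1 0 a9 0 0 0 0 0 rest) n (mk x u 0 r 0 1 1 0 (a9+5*n) 0 0 0 0 0 rest).
Proof.
  induction n; intros a9 Hb.
  - replace (a9 + 5*0) with a9 by lia. apply reach_refl; bnd.
  - eapply reach_cons; [apply R12 | bnd | ].
    replace (a9 + 5 * S n) with ((5+a9) + 5*n) by lia. apply IHn; lia.
Qed.

Lemma RR15 B x u r rest : forall n l, x + u + l + r + n + 1 < B ->
  reach B (mk x u l r 0 0 1 0 n 1 0 0 0 0 rest) n (mk x u (l+n) r 0 0 1 0 0 1 0 0 0 0 rest).
Proof.
  induction n; intros l Hb.
  - replace (l + 0) with l by lia. apply reach_refl; bnd.
  - eapply reach_cons; [apply R15 | bnd | ].
    replace (l + S n) with (S l + n) by lia. apply IHn; lia.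
Qed.

Lemma RR18 B u r rest : forall n l, u + l + r + n + 1 < B ->
  reach B (mk n u l r 0 0 1 0 0 0 1 0 0 0 rest) n (mk 0 u (l+n) r 0 0 1 0 0 0 1 0 0 0 rest).
Proof.
  induction n; intros l Hb.
  - replace (l + 0) with l by lia. apply reach_refl; bnd.
  - eapply reach_cons; [apply R18 | bnd | ].
    replace (l + S n) with (S l + n) by lia. apply IHn; lia.
Qed.

Lemma RR20 B u l r rest : forall n a14, u + 5*n + l + r + a14 + n + 1 < B ->
  reach B (mk 0 u l (5*n+r) 0 0 1 1 0 0 0 0 0 a14 rest) n (mk 0 u l r 0 0 1 1 0 0 0 0 0 (a14+n) rest).
Proof.
  induction n; intros a14 Hb.
  - replace (a14 + 0) with a14 by lia. apply reach_refl; bnd.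
  - replace (5 * S n + r) with (5 + (5*n+r)) by lia.
    eapply reach_cons; [apply R20 | bnd | ].
    replace (a14 + S n) with (S a14 + n) by lia. apply IHn; lia.
Qed.

Lemma RR23 B u l a14 rest : forall n x, x + u + n + l + a14 + 1 < B ->
  reach B (mk x u l n 0 0 1 0 0 0 0 1 0 a14 rest) n (mk (x+n) u l 0 0 0 1 0 0 0 0 1 0 a14 rest).
Proof.
  induction n; intros x Hb.
  - replace (x + 0) with x by lia. apply reach_refl; bnd.
  - eapply reach_cons; [apply R23 | bnd | ].
    replace (x + S n) with (S x + n) by lia. apply IHn; lia.
Qed.

Lemma RR26 B x u l rest : forall n r, x + u + l + r + n + 1 < B ->
  reach B (mk x u l r 0 0 1 0 0 0 0 0 1 n rest) n (mk x u l (r+n) 0 0 1 0 0 0 0 0 1 0 rest).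
Proof.
  induction n; intros r Hb.
  - replace (r + 0) with r by lia. apply reach_refl; bnd.
  - eapply reach_cons; [apply R26 | bnd | ].
    replace (r + S n) with (S r + n) by lia. apply IHn; lia.
Qed.

Lemma move_left B x u la s r rest : 1 <= s < 5 -> x + u + 6*la + s + 5*r + 2 < B ->
  reach B (mk x u (5*la+s) r 0 1 0 0 0 0 0 0 0 0 rest)
    (6*r + x + 2*la + s + 6) (mk s u la (x + 5*r) 1 0 0 0 0 0 0 0 0 0 rest).
Proof.
  intros Hs Hb.
  replace (6*r + x + 2*la + s + 6) with
    (r + (1 + (5*r + (1 + (x + (1 + (la + (1 + (s + (1 + (la + (1 + 0))))))))))))  by lia.
  replace (mk s u la (x + 5*r) 1 0 0 0 0 0 0 0 0 0 rest) with
    (mk (0+s) u (0+la) (0 + (0 + 5*r) + x) 1 0 0 0 0 0 0 0 0 0 rest) by (f_equal; lia).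
  eapply reach_trans. { apply LL11; lia. }
  eapply reach_cons. { apply L13. } { bnd. }
  eapply reach_trans. { apply LL14; lia. }
  eapply reach_cons. { apply L16. } { bnd. }
  eapply reach_trans. { apply LL17; lia. }
  eapply reach_cons. { apply L19. } { bnd. }
  eapply reach_trans. { apply LL21; lia. }
  eapply reach_cons. { apply L22; lia. } { bnd. }
  eapply reach_trans. { apply LL24; lia. }
  eapply reach_cons. { apply L25. } { bnd. }
  eapply reach_trans. { apply LL27; lia. }
  eapply reach_cons. { apply L29. } { bnd. }
  apply reach_refl; bnd.
Qed.

Lemma move_right B x u l s rb rest : 1 <= s < 5 -> x + u + 6*rb + s + 6*l + 2 < B ->
  reach B (mk x u l (5*rb+s) 0 1 1 0 0 0 0 0 0 0 rest)
    (6*l + x + 2*rb + s + 6) (mk s u (x + 5*l) rb 1 0 0 0 0 0 0 0 0 0 rest).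
Proof.
  intros Hs Hb.
  replace (6*l + x + 2*rb + s + 6) with
    (l + (1 + (5*l + (1 + (x + (1 + (rb + (1 + (s + (1 + (rb + (1 + 0))))))))))))  by lia.
  replace (mk s u (x + 5*l) rb 1 0 0 0 0 0 0 0 0 0 rest) with
    (mk (0+s) u (0 + (0 + 5*l) + x) (0+rb) 1 0 0 0 0 0 0 0 0 0 rest) by (f_equal; lia).
  eapply reach_trans. { apply RR12; lia. }
  eapply reach_cons. { apply R13. } { bnd. }
  eapply reach_trans. { apply RR15; lia. }
  eapply reach_cons. { apply R16. } { bnd. }
  eapply reach_trans. { apply RR18; lia. }
  eapply reach_cons. { apply R19. } { bnd. }
  eapply reach_trans. { apply RR20; lia. }
  eapply reach_cons. { apply R22; lia. } { bnd. }
  eapply reach_trans. { apply RR23; lia. }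
  eapply reach_cons. { apply R25. } { bnd. }
  eapply reach_trans. { apply RR26; lia. }
  eapply reach_cons. { apply R28. } { bnd. }
  apply reach_refl; bnd.
Qed.
Lemma code_bnd a : 1 <= sym_code a <= 4.
Proof. destruct a; simpl; lia. Qed.

Lemma lam_app al y : lam (al ++ [y]) = 5 * lam al + sym_code y.
Proof. unfold lam. rewrite fold_left_app. simpl. lia. Qed.

Lemma rho_cons z be : rho (z :: be) = sym_code z + 5 * rho be.
Proof. reflexivity. Qed.

Lemma lam_bound al : lam al < 5 ^ length al.
Proof.
  induction al using rev_ind. simpl. unfold lam; simpl; lia.
  rewrite lam_app, length_app, Nat.add_comm. rewrite Nat.pow_add_r. simpl length. replace (5 ^ 1) with 5 by reflexivity. pose proof (code_bnd x). lia.
Qed.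

Lemma rho_bound be : rho be < 5 ^ length be.
Proof.
  induction be. simpl. unfold rho; simpl; lia.
  rewrite rho_cons. simpl length; rewrite Nat.pow_succ_r'. pose proof (code_bnd a). lia.
Qed.

Definition wupd (T : Z -> sym) (h : Z) (w : sym) : Z -> sym :=
  fun z => if Z.eqb z h then w else T z.

Lemma wd_ins_l T h x be : weak_decomp T h [] x be -> weak_decomp T h wl x be.
Proof.
  intros (H0 & Ha & Hl & Hb & Hr). repeat split; auto.
  - intros i Hi. simpl in Hi. specialize (Hl i). simpl length in Hl.
    replace (h - Z.of_nat 0 - Z.of_nat (S i))%Z with (h - Z.of_nat (S i))%Z in Hl by lia.
    rewrite Hl. rewrite Nat.mod_small by lia. simpl length. f_equal. 
  - intros j. specialize (Hl (j + 4)). simpl length in *.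
    replace (h - Z.of_nat 0 - Z.of_nat (S (j+4)))%Z with (h - Z.of_nat 4 - Z.of_nat (S j))%Z in Hl by lia.
    rewrite Hl. f_equal. f_equal. rewrite <- Nat.Div0.add_mod_idemp_r. rewrite Nat.Div0.mod_same.
    rewrite Nat.add_0_r. auto.
Qed.

Lemma wd_ins_r T h al x : weak_decomp T h al x [] -> weak_decomp T h al x wr.
Proof.
  intros (H0 & Ha & Hl & Hb & Hr). repeat split; auto.
  - intros i Hi. simpl in Hi. specialize (Hr i). simpl length in Hr.
    replace (h + Z.of_nat 0 + Z.of_nat (S i))%Z with (h + Z.of_nat (S i))%Z in Hr by lia.
    rewrite Hr. rewrite Nat.mod_small by lia. auto.
  - intros j. specialize (Hr (j + 6)). simpl length in *.
    replace (h + Z.of_nat 0 + Z.of_nat (S (j+6)))%Z with (h + Z.of_nat 6 + Z.of_nat (S j))%Z in Hr by lia.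
    rewrite Hr. f_equal. rewrite <- Nat.Div0.add_mod_idemp_r. rewrite Nat.Div0.mod_same.
    rewrite Nat.add_0_r. auto.
Qed.

Lemma wd_left T h al y x be w :
  weak_decomp T h (al ++ [y]) x be -> weak_decomp (wupd T h w) (h - 1) al y (w :: be).
Proof.
  intros (H0 & Ha & Hl & Hb & Hr). rewrite length_app in *. simpl length in *.
  unfold wupd. repeat split.
  - rewrite (proj2 (Z.eqb_neq _ _)) by lia. specialize (Ha 0 ltac:(lia)).
    replace (h - Z.of_nat 1)%Z with (h - 1)%Z in Ha by lia. rewrite Ha.
    rewrite app_nth2 by lia. replace (length al + 1 - 1 - 0 - length al) with 0 by lia. auto.
  - intros i Hi. rewrite (proj2 (Z.eqb_neq _ _)) by lia. specialize (Ha (S i) ltac:(lia)).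
    replace (h - 1 - Z.of_nat (S i))%Z with (h - Z.of_nat (S (S i)))%Z by lia. rewrite Ha.
    rewrite app_nth1 by lia. f_equal. lia.
  - intros j. rewrite (proj2 (Z.eqb_neq _ _)) by lia. specialize (Hl j).
    replace (h - 1 - Z.of_nat (length al) - Z.of_nat (S j))%Z
      with (h - Z.of_nat (length al + 1) - Z.of_nat (S j))%Z by lia. auto.
  - intros i Hi. destruct i.
    + rewrite (proj2 (Z.eqb_eq _ _)) by lia. auto.
    + rewrite (proj2 (Z.eqb_neq _ _)) by lia. simpl in Hi. specialize (Hb i ltac:(lia)).
      replace (h - 1 + Z.of_nat (S (S i)))%Z with (h + Z.of_nat (S i))%Z by lia. auto.
  - intros j. simpl length. rewrite (proj2 (Z.eqb_neq _ _)) by lia. specialize (Hr j).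
    replace (h - 1 + Z.of_nat (S (length be)) + Z.of_nat (S j))%Z
      with (h + Z.of_nat (length be) + Z.of_nat (S j))%Z by lia. auto.
Qed.

Lemma wd_right T h al z x be w :
  weak_decomp T h al x (z :: be) -> weak_decomp (wupd T h w) (h + 1) (al ++ [w]) z be.
Proof.
  intros (H0 & Ha & Hl & Hb & Hr). simpl length in *.
  unfold wupd, weak_decomp. rewrite length_app. simpl length. repeat split.
  - rewrite (proj2 (Z.eqb_neq _ _)) by lia. specialize (Hb 0 ltac:(lia)).
    replace (h + Z.of_nat 1)%Z with (h + 1)%Z in Hb by lia. rewrite Hb. auto.
  - intros i Hi. destruct i.
    + rewrite (proj2 (Z.eqb_eq _ _)) by lia. rewrite app_nth2 by lia.
      replace (length al + 1 - 1 - 0 - length al) with 0 by lia. auto.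
    + rewrite (proj2 (Z.eqb_neq _ _)) by lia. specialize (Ha i ltac:(lia)).
      replace (h + 1 - Z.of_nat (S (S i)))%Z with (h - Z.of_nat (S i))%Z by lia. rewrite Ha.
      rewrite app_nth1 by lia. f_equal. lia.
  - intros j. rewrite (proj2 (Z.eqb_neq _ _)) by lia. specialize (Hl j).
    replace (h + 1 - Z.of_nat (length al + 1) - Z.of_nat (S j))%Z
      with (h - Z.of_nat (length al) - Z.of_nat (S j))%Z by lia. auto.
  - intros i Hi. rewrite (proj2 (Z.eqb_neq _ _)) by lia. specialize (Hb (S i) ltac:(lia)).
    replace (h + 1 + Z.of_nat (S i))%Z with (h + Z.of_nat (S (S i)))%Z by lia. auto.
  - intros j. rewrite (proj2 (Z.eqb_neq _ _)) by lia. specialize (Hr j).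
    replace (h + 1 + Z.of_nat (length be) + Z.of_nat (S j))%Z
      with (h + Z.of_nat (S (length be)) + Z.of_nat (S j))%Z by lia. auto.
Qed.

Lemma lam_pos al : al <> [] -> 1 <= lam al.
Proof.
  intros H. destruct (exists_last H) as (al' & y & ->). rewrite lam_app.
  pose proof (code_bnd y). lia.
Qed.

Lemma rho_pos be : be <> [] -> 1 <= rho be.
Proof. destruct be; [congruence|]. intros _. rewrite rho_cons. pose proof (code_bnd s). lia. Qed.

Lemma lam_wl : lam wl = 167. Proof. reflexivity. Qed.
Lemma rho_wr : rho wr = 13596. Proof. reflexivity. Qed.

Definition Rep (M : marking) (c : config) (al be : list sym) : Prop :=
    weak_decomp (ctape c) (chead c) al (ctape c (chead c)) be /\
    M pU = state_code (cstate c) /\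
    M pX = sym_code (ctape c (chead c)) /\
    M pL = lam al /\
    M pR = rho be /\
    M pSTEP = 1%nat /\
    (forall p : nat, (6 <= p <= 14)%nat -> M p = 0%nat).

Lemma Rep_mk M c al be : Rep M c al be ->
  M = mk (sym_code (ctape c (chead c))) (state_code (cstate c)) (lam al) (rho be) 1 0 0 0 0 0 0 0 0 0 M.
Proof.
  intros (_ & HU & HX & HL & HR & HS & H0). apply functional_extensionality; intros p.
  do 5 (destruct p as [|p]; [simpl; auto|]).
  destruct p as [|p]; [simpl; auto|].
  do 9 (destruct p as [|p]; [simpl; apply H0; lia|]). reflexivity.
Qed.

Lemma Rep_intro u T h al x be rest :
  weak_decomp T h al x be ->
  Rep (mk (sym_code x) (state_code u) (lam al) (rho be) 1 0 0 0 0 0 0 0 0 0 rest) (mkConfig u T h) al be.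
Proof.
  intros Hw. pose proof Hw as (H0 & _). simpl. subst x.
  split; [exact Hw|]. repeat split; auto. intros p Hp.
  do 6 (destruct p as [|p]; [lia|]). do 9 (destruct p as [|p]; [reflexivity|]). lia.
Qed.

Lemma insert_phase B T h al be X U rest :
  weak_decomp T h al (T h) be -> X < B -> U < B -> lam al < B -> rho be < B -> 13596 < B -> 167 < B ->
  exists i al1 be1, i <= 2 /\ weak_decomp T h al1 (T h) be1 /\ al1 <> [] /\ be1 <> [] /\
    length al1 <= Nat.max (length al) 4 /\ length be1 <= Nat.max (length be) 6 /\
    reach B (mk X U (lam al) (rho be) 1 0 0 0 0 0 0 0 0 0 rest) i
            (mk X U (lam al1) (rho be1) 1 0 0 0 0 0 0 0 0 0 rest).
Proof.
  intros Hw HX HU HL HR HB HB'.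
  destruct al as [|a al']; destruct be as [|b be'].
  - exists 2, wl, wr. split; [lia|]. split. { apply wd_ins_r, wd_ins_l, Hw. }
    split; [discriminate|]. split; [discriminate|]. split; [simpl; lia|]. split; [simpl; lia|].
    rewrite lam_wl, rho_wr.
    eapply reach_cons. { apply s_t1. } { bnd. }
    eapply reach_cons. { apply (s_t2 X U 166). } { bnd. }
    apply reach_refl; bnd.
  - exists 1, wl, (b :: be'). split; [lia|]. split. { apply wd_ins_l, Hw. }
    split; [discriminate|]. split; [discriminate|]. split; [simpl; lia|]. split; [simpl; lia|].
    rewrite lam_wl. pose proof (rho_pos (b :: be') ltac:(discriminate)).
    replace (rho (b :: be')) with (S (rho (b :: be') - 1)) by lia.
    eapply reach_cons. { apply s_t1. } { bnd. }
    apply reach_refl; bnd.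
  - exists 1, (a :: al'), wr. split; [lia|]. split. { apply wd_ins_r, Hw. }
    split; [discriminate|]. split; [discriminate|]. split; [simpl; lia|]. split; [simpl; lia|].
    rewrite rho_wr. pose proof (lam_pos (a :: al') ltac:(discriminate)).
    replace (lam (a :: al')) with (S (lam (a :: al') - 1)) by lia.
    eapply reach_cons. { apply s_t2. } { simpl (rho []). bnd. }
    apply reach_refl; bnd.
  - exists 0, (a :: al'), (b :: be'). split; [lia|]. split; auto.
    split; [discriminate|]. split; [discriminate|]. split; [simpl; lia|]. split; [simpl; lia|].
    apply reach_refl; bnd.
Qed.
Lemma w3' l r rest : 1 <= l -> 1 <= r -> dipn_step UPN (mk 4 1 l r 1 0 0 0 0 0 0 0 0 0 rest) = Some (mk 2 1 l r 0 1 1 0 0 0 0 0 0 0 rest).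
Proof. intros; destruct l; [lia|]; destruct r; [lia|]; apply w3. Qed.

Lemma w4' l r rest : 1 <= l -> 1 <= r -> dipn_step UPN (mk 4 0 l r 1 0 0 0 0 0 0 0 0 0 rest) = Some (mk 4 0 l r 0 1 0 0 0 0 0 0 0 0 rest).
Proof. intros; destruct l; [lia|]; destruct r; [lia|]; apply w4. Qed.

Lemma w5' l r rest : 1 <= l -> 1 <= r -> dipn_step UPN (mk 3 1 l r 1 0 0 0 0 0 0 0 0 0 rest) = Some (mk 1 1 l r 0 1 1 0 0 0 0 0 0 0 rest).
Proof. intros; destruct l; [lia|]; destruct r; [lia|]; apply w5. Qed.

Lemma w6' l r rest : 1 <= l -> 1 <= r -> dipn_step UPN (mk 3 0 l r 1 0 0 0 0 0 0 0 0 0 rest) = Some (mk 4 0 l r 0 1 0 0 0 0 0 0 0 0 rest).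
Proof. intros; destruct l; [lia|]; destruct r; [lia|]; apply w6. Qed.

Lemma w7' l r rest : 1 <= l -> 1 <= r -> dipn_step UPN (mk 2 1 l r 1 0 0 0 0 0 0 0 0 0 rest) = Some (mk 3 1 l r 0 1 0 0 0 0 0 0 0 0 rest).
Proof. intros; destruct l; [lia|]; destruct r; [lia|]; apply w7. Qed.

Lemma w8' l r rest : 1 <= l -> 1 <= r -> dipn_step UPN (mk 2 0 l r 1 0 0 0 0 0 0 0 0 0 rest) = Some (mk 4 1 l r 0 1 0 0 0 0 0 0 0 0 rest).
Proof. intros; destruct l; [lia|]; destruct r; [lia|]; apply w8. Qed.

Lemma w9' l r rest : 1 <= l -> 1 <= r -> dipn_step UPN (mk 1 1 l r 1 0 0 0 0 0 0 0 0 0 rest) = Some (mk 4 0 l r 0 1 1 0 0 0 0 0 0 0 rest).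
Proof. intros; destruct l; [lia|]; destruct r; [lia|]; apply w9. Qed.

Lemma w10' l r rest : 1 <= l -> 1 <= r -> dipn_step UPN (mk 1 0 l r 1 0 0 0 0 0 0 0 0 0 rest) = Some (mk 3 0 l r 0 1 0 0 0 0 0 0 0 0 rest).
Proof. intros; destruct l; [lia|]; destruct r; [lia|]; apply w10. Qed.


Lemma left_case B M i X U Xw Uw al2 y zb rest :
  reach B M i (mk X U (lam (al2 ++ [y])) (rho zb) 1 0 0 0 0 0 0 0 0 0 rest) ->
  (forall l r, 1 <= l -> 1 <= r -> dipn_step UPN (mk X U l r 1 0 0 0 0 0 0 0 0 0 rest) =
      Some (mk Xw Uw l r 0 1 0 0 0 0 0 0 0 0 rest)) ->
  zb <> [] -> X < B -> U < B -> lam (al2 ++ [y]) < B -> rho zb < B -> 1 < B ->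
  Xw + Uw + 6 * lam al2 + sym_code y + 5 * rho zb + 2 < B ->
  reach B M (i + S (6 * rho zb + Xw + 2 * lam al2 + sym_code y + 6))
    (mk (sym_code y) Uw (lam al2) (Xw + 5 * rho zb) 1 0 0 0 0 0 0 0 0 0 rest).
Proof.
  intros Hr Hw Hz HX HU HL HR H1 Hb.
  eapply reach_trans; [exact Hr|].
  eapply reach_cons.
  { apply Hw; [apply lam_pos | apply rho_pos; auto].
    intro E; apply app_eq_nil in E; destruct E; discriminate. }
  { bnd. }
  rewrite lam_app. apply move_left; [pose proof (code_bnd y); lia | lia].
Qed.

Lemma right_case B M i X U Xw Uw al1 z be2 rest :
  reach B M i (mk X U (lam al1) (rho (z :: be2)) 1 0 0 0 0 0 0 0 0 0 rest) ->
  (forall l r, 1 <= l -> 1 <= r -> dipn_step UPN (mk X U l r 1 0 0 0 0 0 0 0 0 0 rest) =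
      Some (mk Xw Uw l r 0 1 1 0 0 0 0 0 0 0 rest)) ->
  al1 <> [] -> X < B -> U < B -> lam al1 < B -> rho (z :: be2) < B -> 1 < B ->
  Xw + Uw + 6 * rho be2 + sym_code z + 6 * lam al1 + 2 < B ->
  reach B M (i + S (6 * lam al1 + Xw + 2 * rho be2 + sym_code z + 6))
    (mk (sym_code z) Uw (Xw + 5 * lam al1) (rho be2) 1 0 0 0 0 0 0 0 0 0 rest).
Proof.
  intros Hr Hw Hz HX HU HL HR H1 Hb.
  eapply reach_trans; [exact Hr|].
  eapply reach_cons.
  { apply Hw; [apply lam_pos; auto | apply rho_pos; discriminate]. }
  { bnd. }
  replace (rho (z :: be2)) with (5 * rho be2 + sym_code z) by (rewrite rho_cons; lia).
  apply move_right; [pose proof (code_bnd z); lia | lia].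
Qed.

Lemma pow5_le a b : a <= b -> 5 ^ a <= 5 ^ b.
Proof. intros; apply Nat.pow_le_mono_r; lia. Qed.

Lemma big1 : 13596 < 15625. Proof. apply Nat.ltb_lt. reflexivity. Qed.
Lemma big2 : 167 < 15625. Proof. apply Nat.ltb_lt. reflexivity. Qed.
Lemma pow56 : 5 ^ 6 = 15625. Proof. reflexivity. Qed.

Lemma cycle M c al be : Rep M c al be ->
  exists m M' al' be',
    1 <= m <= 10 * 5 ^ (Nat.max (length al) (Nat.max (length be) 6)) /\
    reach (5 ^ (Nat.max (length al) (Nat.max (length be) 6) + 2)) M m M' /\
    Rep M' (tm_step c) al' be' /\
    length al' <= Nat.max (length al) (Nat.max (length be) 6) + 1 /\
    length be' <= Nat.max (length al) (Nat.max (length be) 6) + 1.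
Proof.
  intros HR.
  assert (HN: exists N, N = Nat.max (length al) (Nat.max (length be) 6)) by eauto.
  destruct HN as [N HN]. rewrite <- HN.
  assert (Hla : length al <= N) by lia. assert (Hlb : length be <= N) by lia.
  assert (HN6 : 6 <= N) by lia.
  assert (P6 : 15625 <= 5 ^ N) by (rewrite <- pow56; apply pow5_le; lia).
  assert (PB : 5 ^ (N + 2) = 25 * 5 ^ N) by (rewrite Nat.pow_add_r; simpl (5 ^ 2); lia).
  pose proof big1. pose proof big2.
  pose proof (Rep_mk _ _ _ _ HR) as HM. destruct HR as (Hwd & _).
  destruct c as [u T h]. simpl in Hwd, HM |- *.
  assert (Hlam : lam al < 5 ^ N) by (pose proof (lam_bound al); pose proof (pow5_le _ _ Hla); lia).
  assert (Hrho : rho be < 5 ^ N) by (pose proof (rho_bound be); pose proof (pow5_le _ _ Hlb); lia).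
  assert (Hu : state_code u <= 1) by (destruct u; simpl; lia).
  assert (Hx : sym_code (T h) <= 4) by (pose proof (code_bnd (T h)); lia).
  rewrite HM.
  destruct (insert_phase (5 ^ (N + 2)) T h al be (sym_code (T h)) (state_code u) M Hwd)
    as (i & al1 & be1 & Hi & Hwd1 & Hna & Hnb & Hla1 & Hlb1 & Hr1); try lia.
  assert (Hlam1 : lam al1 < 5 ^ N).
  { pose proof (lam_bound al1); assert (Ht : length al1 <= N) by lia; pose proof (pow5_le _ _ Ht); lia. }
  assert (Hrho1 : rho be1 < 5 ^ N).
  { pose proof (rho_bound be1); assert (Ht : length be1 <= N) by lia; pose proof (pow5_le _ _ Ht); lia. }
  destruct (exists_last Hna) as (al2 & y & Eal). subst al1.
  destruct be1 as [|z be2]; [congruence|].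
  pose proof (code_bnd y). pose proof (code_bnd z).
  rewrite lam_app in Hlam1. rewrite rho_cons in Hrho1.
  rewrite length_app in Hla1. simpl length in Hla1, Hlb1.
  destruct u; destruct (T h) eqn:Ex.

  -
    exists (i + S (6 * rho (z :: be2) + 3 + 2 * lam al2 + sym_code y + 6)),
      (mk (sym_code y) (state_code u1) (lam al2) (3 + 5 * rho (z :: be2)) 1 0 0 0 0 0 0 0 0 0 M),
      al2, (S0b :: z :: be2).
    split. { rewrite rho_cons; lia. }
    split. { eapply left_case; [exact Hr1 | intros; try rewrite Ex; apply w10'; auto | discriminate | ..];
              rewrite ?lam_app, ?rho_cons; cbn [state_code sym_code] in *; lia. }
    split. { unfold tm_step; simpl; try rewrite Ex; simpl.
              apply (Rep_intro u1 _ _ al2 y (S0b :: z :: be2) M).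
              apply (wd_left T h al2 y _ (z :: be2) S0b Hwd1). }
    simpl length; lia.

  -
    exists (i + S (6 * rho (z :: be2) + 4 + 2 * lam al2 + sym_code y + 6)),
      (mk (sym_code y) (state_code u2) (lam al2) (4 + 5 * rho (z :: be2)) 1 0 0 0 0 0 0 0 0 0 M),
      al2, (S1b :: z :: be2).
    split. { rewrite rho_cons; lia. }
    split. { eapply left_case; [exact Hr1 | intros; try rewrite Ex; apply w8'; auto | discriminate | ..];
              rewrite ?lam_app, ?rho_cons; cbn [state_code sym_code] in *; lia. }
    split. { unfold tm_step; simpl; try rewrite Ex; simpl.
              apply (Rep_intro u2 _ _ al2 y (S1b :: z :: be2) M).
              apply (wd_left T h al2 y _ (z :: be2) S1b Hwd1). }
    simpl length; lia.

  -
    exists (i + S (6 * rho (z :: be2) + 4 + 2 * lam al2 + sym_code y + 6)),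
      (mk (sym_code y) (state_code u1) (lam al2) (4 + 5 * rho (z :: be2)) 1 0 0 0 0 0 0 0 0 0 M),
      al2, (S1b :: z :: be2).
    split. { rewrite rho_cons; lia. }
    split. { eapply left_case; [exact Hr1 | intros; try rewrite Ex; apply w6'; auto | discriminate | ..];
              rewrite ?lam_app, ?rho_cons; cbn [state_code sym_code] in *; lia. }
    split. { unfold tm_step; simpl; try rewrite Ex; simpl.
              apply (Rep_intro u1 _ _ al2 y (S1b :: z :: be2) M).
              apply (wd_left T h al2 y _ (z :: be2) S1b Hwd1). }
    simpl length; lia.

  -
    exists (i + S (6 * rho (z :: be2) + 4 + 2 * lam al2 + sym_code y + 6)),
      (mk (sym_code y) (state_code u1) (lam al2) (4 + 5 * rho (z :: be2)) 1 0 0 0 0 0 0 0 0 0 M),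
      al2, (S1b :: z :: be2).
    split. { rewrite rho_cons; lia. }
    split. { eapply left_case; [exact Hr1 | intros; try rewrite Ex; apply w4'; auto | discriminate | ..];
              rewrite ?lam_app, ?rho_cons; cbn [state_code sym_code] in *; lia. }
    split. { unfold tm_step; simpl; try rewrite Ex; simpl.
              apply (Rep_intro u1 _ _ al2 y (S1b :: z :: be2) M).
              apply (wd_left T h al2 y _ (z :: be2) S1b Hwd1). }
    simpl length; lia.

  -
    exists (i + S (6 * lam (al2 ++ [y]) + 4 + 2 * rho be2 + sym_code z + 6)),
      (mk (sym_code z) (state_code u1) (4 + 5 * lam (al2 ++ [y])) (rho be2) 1 0 0 0 0 0 0 0 0 0 M),
      ((al2 ++ [y]) ++ [S1b]), be2.
    split. { rewrite lam_app; lia. }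
    split. { eapply right_case; [exact Hr1 | intros; try rewrite Ex; apply w9'; auto | | ..];
              [intro E; apply app_eq_nil in E; destruct E; discriminate | ..];
              rewrite ?lam_app, ?rho_cons; cbn [state_code sym_code] in *; lia. }
    split. {
              replace (4 + 5 * lam (al2 ++ [y])) with (lam ((al2 ++ [y]) ++ [S1b]))
                by (rewrite (lam_app (al2 ++ [y])); simpl; lia).
              unfold tm_step; simpl; try rewrite Ex; simpl.
              apply (Rep_intro u1 _ _ ((al2 ++ [y]) ++ [S1b]) z be2 M).
              apply (wd_right T h (al2 ++ [y]) z _ be2 S1b Hwd1). }
    rewrite !length_app; simpl length; lia.

  -
    exists (i + S (6 * rho (z :: be2) + 3 + 2 * lam al2 + sym_code y + 6)),
      (mk (sym_code y) (state_code u2) (lam al2) (3 + 5 * rho (z :: be2)) 1 0 0 0 0 0 0 0 0 0 M),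
      al2, (S0b :: z :: be2).
    split. { rewrite rho_cons; lia. }
    split. { eapply left_case; [exact Hr1 | intros; try rewrite Ex; apply w7'; auto | discriminate | ..];
              rewrite ?lam_app, ?rho_cons; cbn [state_code sym_code] in *; lia. }
    split. { unfold tm_step; simpl; try rewrite Ex; simpl.
              apply (Rep_intro u2 _ _ al2 y (S0b :: z :: be2) M).
              apply (wd_left T h al2 y _ (z :: be2) S0b Hwd1). }
    simpl length; lia.

  -
    exists (i + S (6 * lam (al2 ++ [y]) + 1 + 2 * rho be2 + sym_code z + 6)),
      (mk (sym_code z) (state_code u2) (1 + 5 * lam (al2 ++ [y])) (rho be2) 1 0 0 0 0 0 0 0 0 0 M),
      ((al2 ++ [y]) ++ [S0]), be2.
    split. { rewrite lam_app; lia. }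
    split. { eapply right_case; [exact Hr1 | intros; try rewrite Ex; apply w5'; auto | | ..];
              [intro E; apply app_eq_nil in E; destruct E; discriminate | ..];
              rewrite ?lam_app, ?rho_cons; cbn [state_code sym_code] in *; lia. }
    split. {
              replace (1 + 5 * lam (al2 ++ [y])) with (lam ((al2 ++ [y]) ++ [S0]))
                by (rewrite (lam_app (al2 ++ [y])); simpl; lia).
              unfold tm_step; simpl; try rewrite Ex; simpl.
              apply (Rep_intro u2 _ _ ((al2 ++ [y]) ++ [S0]) z be2 M).
              apply (wd_right T h (al2 ++ [y]) z _ be2 S0 Hwd1). }
    rewrite !length_app; simpl length; lia.

  -
    exists (i + S (6 * lam (al2 ++ [y]) + 2 + 2 * rho be2 + sym_code z + 6)),
      (mk (sym_code z) (state_code u2) (2 + 5 * lam (al2 ++ [y])) (rho be2) 1 0 0 0 0 0 0 0 0 0 M),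
      ((al2 ++ [y]) ++ [S1]), be2.
    split. { rewrite lam_app; lia. }
    split. { eapply right_case; [exact Hr1 | intros; try rewrite Ex; apply w3'; auto | | ..];
              [intro E; apply app_eq_nil in E; destruct E; discriminate | ..];
              rewrite ?lam_app, ?rho_cons; cbn [state_code sym_code] in *; lia. }
    split. {
              replace (2 + 5 * lam (al2 ++ [y])) with (lam ((al2 ++ [y]) ++ [S1]))
                by (rewrite (lam_app (al2 ++ [y])); simpl; lia).
              unfold tm_step; simpl; try rewrite Ex; simpl.
              apply (Rep_intro u2 _ _ ((al2 ++ [y]) ++ [S1]) z be2 M).
              apply (wd_right T h (al2 ++ [y]) z _ be2 S1 Hwd1). }
    rewrite !length_app; simpl length; lia.

Qed.

From Stdlib Require Import IndefiniteDescription.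

Definition St := (nat * marking * list sym * list sym)%type.

Definition Inv (M0 : marking) (c0 : config) (A k : nat) (s : St) : Prop :=
  match s with (n, M, al, be) =>
    dipn_run UPN M0 n = Some M /\ Rep M (tm_iter k c0) al be /\
    Nat.max (length al) (Nat.max (length be) 6) <= A + k /\
    n <= 10 * 5 ^ A * k * 5 ^ k /\
    (forall j M', j <= n -> dipn_run UPN M0 j = Some M' -> bounded (5 ^ (A + k + 2)) M')
  end.

Definition stn (s : St) : nat := fst (fst (fst s)).

Lemma bounded_mono B B' M : B <= B' -> bounded B M -> bounded B' M.
Proof. intros H Hb p Hp. specialize (Hb p Hp). lia. Qed.

Lemma time_ineq C k P n m : n <= C * k * P -> m <= C * P -> n + m <= C * S k * (5 * P).
Proof. intros. nia. Qed.

Lemma inv_step M0 c0 A k s : Inv M0 c0 A k s ->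
  exists s', Inv M0 c0 A (S k) s' /\ stn s < stn s'.
Proof.
  destruct s as [[[n M] al] be]. intros (Hrun & HR & Hlen & Ht & Hsp).
  destruct (cycle _ _ _ _ HR) as (m & M' & al' & be' & Hm & [Hr Hrb] & HR' & Hl1 & Hl2).
  set (N := Nat.max (length al) (Nat.max (length be) 6)) in *.
  assert (HP : 5 ^ N <= 5 ^ A * 5 ^ k) by (rewrite <- Nat.pow_add_r; apply pow5_le; lia).
  exists (n + m, M', al', be'). split; [|unfold stn; simpl; lia].
  split; [rewrite run_add, Hrun; auto|].
  split; [exact HR'|].
  split; [lia|].
  split.
  { rewrite Nat.pow_succ_r'. apply time_ineq; lia. }
  intros j M'' Hj Hj'.
  destruct (le_lt_dec j n).
  - eapply bounded_mono; [|apply (Hsp j); eauto]. apply pow5_le; lia.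
  - replace j with (n + (j - n)) in Hj' by lia. rewrite run_add, Hrun in Hj'.
    eapply bounded_mono; [|apply (Hrb (j - n)); [lia | exact Hj']]. apply pow5_le; lia.
Qed.

Definition step_sig M0 c0 A k (p : {s | Inv M0 c0 A k s}) :
  {s' | Inv M0 c0 A (S k) s' /\ stn (proj1_sig p) < stn s'} :=
  constructive_indefinite_description _ (inv_step M0 c0 A k (proj1_sig p) (proj2_sig p)).

Fixpoint seqs M0 c0 A (s0 : {s | Inv M0 c0 A 0 s}) (k : nat) : {s | Inv M0 c0 A k s} :=
  match k with
  | 0 => s0
  | S k' => let p := step_sig M0 c0 A k' (seqs M0 c0 A s0 k') in
            exist _ (proj1_sig p) (proj1 (proj2_sig p))
  end.

Lemma seqs_incr M0 c0 A s0 k :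
  stn (proj1_sig (seqs M0 c0 A s0 k)) < stn (proj1_sig (seqs M0 c0 A s0 (S k))).
Proof. simpl. exact (proj2 (proj2_sig (step_sig M0 c0 A k (seqs M0 c0 A s0 k)))). Qed.

Lemma seqs_ge M0 c0 A s0 k : stn (proj1_sig s0) = 0 -> k <= stn (proj1_sig (seqs M0 c0 A s0 k)).
Proof.
  intros H0. induction k. lia. pose proof (seqs_incr M0 c0 A s0 k). lia.
Qed.

Lemma inv0 M0 c0 al0 be0 : Rep M0 c0 al0 be0 ->
  Inv M0 c0 (Nat.max (length al0) (Nat.max (length be0) 6)) 0 (0, M0, al0, be0).
Proof.
  intros HR. set (A := Nat.max (length al0) (Nat.max (length be0) 6)).
  simpl. split; auto. split; auto. split; [lia|]. split; [lia|].
  intros j M' Hj Hr. assert (j = 0) by lia; subst. simpl in Hr. inversion Hr; subst M'.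
  pose proof (Rep_mk _ _ _ _ HR) as HM. rewrite HM.
  assert (Hla : 5 ^ length al0 <= 5 ^ A) by (apply pow5_le; lia).
  assert (Hlb : 5 ^ length be0 <= 5 ^ A) by (apply pow5_le; lia).
  assert (PB : 5 ^ (A + 0 + 2) = 25 * 5 ^ A) by (rewrite !Nat.pow_add_r; simpl; lia).
  pose proof (lam_bound al0). pose proof (rho_bound be0).
  pose proof (code_bnd (ctape c0 (chead c0))).
  assert (state_code (cstate c0) <= 1) by (destruct (cstate c0); simpl; lia).
  assert (1 <= 5 ^ A) by (pose proof (pow5_le 0 A); simpl in *; lia).
  rewrite PB. bnd.
Qed.

Theorem theorem1 :
  forall (c0 : config) (M0 : marking),
    represents M0 c0 ->
    (* the run of UPN(14,29) from M0 never halts *)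
    (forall j : nat, dipn_run UPN M0 j <> None) /\
    exists n : nat -> nat,
      n 0%nat = 0%nat /\
      (forall k : nat, (n k < n (S k))%nat) /\
      (forall k : nat, exists M : marking,
          dipn_run UPN M0 (n k) = Some M /\ represents M (tm_iter k c0)) /\
      (* time: n_k = O(k * 5^k) *)
      (exists C : nat, forall k : nat, (n k <= C * k * 5 ^ k)%nat) /\
      (* space: O(k) base-5 digits in every place during the first n_k firings *)
      (exists C : nat, forall k : nat, (1 <= k)%nat ->
          forall (j : nat) (M : marking), (j <= n k)%nat ->
            dipn_run UPN M0 j = Some M ->
            forall p : nat, (1 <= p <= 14)%nat -> (M p < 5 ^ (C * k))%nat).
Proof.
  intros c0 M0 (al0 & be0 & HR0).
  set (A := Nat.max (length al0) (Nat.max (length be0) 6)).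
  set (s0 := exist (Inv M0 c0 A 0) (0, M0, al0, be0) (inv0 M0 c0 al0 be0 HR0)).
  set (nf := fun k => stn (proj1_sig (seqs M0 c0 A s0 k))).
  assert (Hinv : forall k, Inv M0 c0 A k (proj1_sig (seqs M0 c0 A s0 k)))
    by (intros k; exact (proj2_sig (seqs M0 c0 A s0 k))).
  assert (Hrun : forall k, dipn_run UPN M0 (nf k) <> None).
  { intros k. specialize (Hinv k). unfold nf, stn.
    destruct (proj1_sig (seqs M0 c0 A s0 k)) as [[[n M] al] be]. simpl.
    destruct Hinv as (H & _). rewrite H. discriminate. }
  split.
  { intros j Hj. pose proof (seqs_ge M0 c0 A s0 j eq_refl) as Hge. fold (nf j) in Hge.
    apply (Hrun j). replace (nf j) with (j + (nf j - j)) by lia. apply run_None; auto. }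
  exists nf. split; [reflexivity|]. split.
  { intros k. apply seqs_incr. }
  split.
  { intros k. specialize (Hinv k). unfold nf, stn.
    destruct (proj1_sig (seqs M0 c0 A s0 k)) as [[[n M] al] be]. simpl.
    destruct Hinv as (H & HR & _). exists M. split; auto. exists al, be. exact HR. }
  split.
  { exists (10 * 5 ^ A). intros k. specialize (Hinv k). unfold nf, stn.
    destruct (proj1_sig (seqs M0 c0 A s0 k)) as [[[n M] al] be]. simpl.
    destruct Hinv as (_ & _ & _ & Ht & _). exact Ht. }
  exists (A + 3). intros k Hk j M Hj Hr p Hp. specialize (Hinv k). unfold nf, stn in Hj.
  destruct (proj1_sig (seqs M0 c0 A s0 k)) as [[[n M1] al] be]. simpl in Hj.
  destruct Hinv as (_ & _ & _ & _ & Hsp).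
  specialize (Hsp j M Hj Hr p Hp).
  assert (5 ^ (A + k + 2) <= 5 ^ ((A + 3) * k)) by (apply pow5_le; nia). lia.
Qed.
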